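(* Let $\mathcal{X}\subset\mathbb{R}^N$ be convex and compact, and let $f_{t+1}:\mathbb{R}^N\to\mathbb{R}$ be differentiable and convex with $L$-Lipschitz gradient on $\mathcal{X}$, i.e. $\|\nabla f_{t+1}(\mathbf{x})-\nabla f_{t+1}(\mathbf{y})\|\le L\|\mathbf{x}-\mathbf{y}\|$ for all $\mathbf{x},\mathbf{y}\in\mathcal{X}$, where $0<L<\infty$. Let $\bar{\mathbf{x}}_{t+1}\in\mathcal{X}$, and let $\mathbf{g}_t\in\mathbb{R}^N$ and $\epsilon>0$ satisfy $\|\mathbf{g}_t-\nabla f_{t+1}(\bar{\mathbf{x}}_{t+1})\|\le\epsilon$, with $\|\mathbf{g}_t\|>\epsilon$. Let $\delta>0$ and $0<\beta\le 1/L$, and define the predictive update $\mathbf{x}_{t+1}=\mathrm{proj}_{\mathcal{X}}(\bar{\mathbf{x}}_{t+1}-\beta\mathbf{g}_t)$ and $\mathbf{d}_{t+1}=\mathbf{x}_{t+1}-\bar{\mathbf{x}}_{t+1}$. If $$\|\mathbf{d}_{t+1}\|\ge\frac{\epsilon}{L}+\sqrt{\frac{\epsilon^2}{L^2}+\frac{2\delta}{L}},$$ then $f_{t+1}(\mathbf{x}_{t+1})\le f_{t+1}(\bar{\mathbf{x}}_{t+1})-\delta$, i.e. the predictive update strictly improves on the OCO update $\bar{\mathbf{x}}_{t+1}$ by at least $\delta$.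
   Context: $\|\cdot\|$ is the Euclidean norm and $\mathrm{proj}_{\mathcal{X}}(\mathbf{x})\in\arg\min_{\mathbf{y}\in\mathcal{X}}\|\mathbf{x}-\mathbf{y}\|$. In the paper's online setting, $\bar{\mathbf{x}}_{t+1}$ is the decision computed by an online convex optimization (OCO) update at round $t$, and $\mathbf{g}_t$ is an estimate ($\epsilon$-forecaster) of the gradient of the next-round loss $f_{t+1}$ at $\bar{\mathbf{x}}_{t+1}$ with error at most $\epsilon$. *)

(* Defs.v *)
From HB Require Import structures.
From mathcomp Require Import all_boot all_order all_algebra.
From mathcomp Require Import all_classical all_reals all_analysis.
Set Implicit Arguments. Unset Strict Implicit. Unset Printing Implicit Defensive.
Import Order.TTheory GRing.Theory Num.Theory.
Import numFieldNormedType.Exports.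
Local Open Scope classical_set_scope.
Local Open Scope ring_scope.

(* Euclidean inner product and Euclidean norm on R^N (the library norm on
   matrices is the sup norm, so we define the Euclidean one explicitly). *)
Definition dotv {R : realType} {N : nat} (u v : 'rV[R]_N) : R :=
  \sum_(i < N) u ord0 i * v ord0 i.
Definition enorm {R : realType} {N : nat} (v : 'rV[R]_N) : R :=
  Num.sqrt (dotv v v).

Definition gradient {R : realType} {N : nat} (f : 'rV[R]_N -> R) (x : 'rV[R]_N)
  : 'rV[R]_N := \row_(i < N) ('d f x : 'rV[R]_N -> R) (delta_mx ord0 i).

Definition convex_setE {R : realType} {N : nat} (X : set 'rV[R]_N) : Prop :=
  forall x y (t : R), X x -> X y -> 0 <= t <= 1 -> X ((1 - t) *: x + t *: y).

Definition convex_fun {R : realType} {N : nat} (f : 'rV[R]_N -> R) : Prop :=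
  forall x y (t : R), 0 <= t <= 1 ->
    f ((1 - t) *: x + t *: y) <= (1 - t) * f x + t * f y.

Definition is_proj {R : realType} {N : nat} (X : set 'rV[R]_N) (z p : 'rV[R]_N)
  : Prop := X p /\ forall y, X y -> enorm (z - p) <= enorm (z - y).

(* Main.v *)
Require Import Defs.
From HB Require Import structures.
From mathcomp Require Import all_boot all_order all_algebra.
From mathcomp Require Import all_classical all_reals all_analysis.
From mathcomp Require Import lra.
Import Order.TTheory GRing.Theory Num.Theory.
Import numFieldNormedType.Exports.
Local Open Scope classical_set_scope.
Local Open Scope ring_scope.


Section Dot.
Context {R : realType} {N : nat}.
Implicit Types u v w : 'rV[R]_N.

Lemma dotvC u v : dotv u v = dotv v u.
Proof. by apply: eq_bigr => i _; rewrite mulrC. Qed.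

Lemma dotvDl u v w : dotv (u + v) w = dotv u w + dotv v w.
Proof. by rewrite /dotv -big_split; apply: eq_bigr => i _; rewrite mxE mulrDl. Qed.

Lemma dotvZl (a : R) u v : dotv (a *: u) v = a * dotv u v.
Proof. by rewrite /dotv mulr_sumr; apply: eq_bigr => i _; rewrite mxE mulrA. Qed.

Lemma dotvNl u v : dotv (- u) v = - dotv u v.
Proof. by rewrite -scaleN1r dotvZl mulN1r. Qed.

Lemma dotvBl u v w : dotv (u - v) w = dotv u w - dotv v w.
Proof. by rewrite dotvDl dotvNl. Qed.

Lemma dotvDr u v w : dotv w (u + v) = dotv w u + dotv w v.
Proof. by rewrite dotvC dotvDl !(dotvC w). Qed.

Lemma dotvZr (a : R) u v : dotv v (a *: u) = a * dotv v u.
Proof. by rewrite dotvC dotvZl dotvC. Qed.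

Lemma dotvBr u v w : dotv w (u - v) = dotv w u - dotv w v.
Proof. by rewrite dotvC dotvBl !(dotvC w). Qed.

Lemma dotv_ge0 u : 0 <= dotv u u.
Proof. by apply: sumr_ge0 => i _; rewrite -expr2 sqr_ge0. Qed.

Lemma enorm_ge0 u : 0 <= enorm u.
Proof. exact: sqrtr_ge0. Qed.

Lemma enorm_sq u : enorm u ^+ 2 = dotv u u.
Proof. by rewrite sqr_sqrtr // dotv_ge0. Qed.

Lemma dotv0 u v : dotv u u = 0 -> dotv u v = 0.
Proof.
move=> h; apply: big1 => i _.
have := @psumr_eq0P _ _ xpredT (fun i => u ord0 i * u ord0 i).
move=> /(_ (fun i _ => ltac:(by rewrite -expr2 sqr_ge0)) h i isT) /eqP.
by rewrite mulf_eq0 orbb => /eqP ->; rewrite mul0r.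
Qed.

Lemma cauchy_schwarz u v : dotv u v <= enorm u * enorm v.
Proof.
set a := enorm u; set b := enorm v.
have a0 : 0 <= a by exact: enorm_ge0.
have b0 : 0 <= b by exact: enorm_ge0.
have hA : dotv u u = a ^+ 2 by rewrite enorm_sq.
have hB : dotv v v = b ^+ 2 by rewrite enorm_sq.
have := dotv_ge0 (b *: u - a *: v).
rewrite !(dotvBl, dotvBr, dotvZl, dotvZr) hA hB (dotvC v u) => h.
have [az|anz] := eqVneq a 0.
  by rewrite dotv0 ?az ?mul0r // hA az expr0n.
have [bz|bnz] := eqVneq b 0.
  by rewrite dotvC dotv0 ?bz ?mulr0 // hB bz expr0n.
have ab : 0 < a * b by rewrite mulr_gt0 // lt0r ?anz ?bnz.
have : a * b * dotv u v <= a * b * (a * b) by nra.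
by rewrite ler_pM2l.
Qed.

Lemma enormZ (a : R) u : 0 <= a -> enorm (a *: u) = a * enorm u.
Proof.
move=> a0; rewrite /enorm dotvZl dotvZr mulrA -expr2 sqrtrM ?sqr_ge0 //.
by rewrite sqrtr_sqr ger0_norm.
Qed.

Lemma enormN u : enorm (- u) = enorm u.
Proof. by rewrite /enorm dotvNl dotvC dotvNl opprK. Qed.

Lemma enorm_le_sq u v : enorm u <= enorm v -> dotv u u <= dotv v v.
Proof. by rewrite /enorm ler_sqrt // dotv_ge0. Qed.

End Dot.

Lemma dotv_expand {R : realType} {N : nat} (w v : 'rV[R]_N) (t : R) :
  dotv (w + t *: v) (w + t *: v) = dotv w w + 2 * t * dotv w v + t ^+ 2 * dotv v v.
Proof.
rewrite !(dotvDl, dotvDr, dotvZl, dotvZr) (dotvC v w); lra.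
Qed.


Section Calc.
Variables (R : realType) (N : nat) (f : 'rV[R]_N -> R).

Lemma diff_grad x v : 'd f x v = dotv (gradient f x) v.
Proof.
rewrite {1}(row_sum_delta v) linear_sum /dotv.
apply: eq_bigr => i _; rewrite linearZ /= mxE mulrC.
by [].
Qed.

Lemma phi_derive (x d : 'rV[R]_N) (t : R) :
  (forall y, differentiable f y) ->
  is_derive t 1 (fun s : R => f (x + s *: d)) (dotv (gradient f (x + t *: d)) d).
Proof.
move=> df.
have E : (fun h : R => h^-1 *: (((fun s : R => f (x + s *: d)) \o shift t) (h *: 1)
            - f (x + t *: d))) =
         (fun h : R => h^-1 *: ((f \o shift (x + t *: d)) (h *: d) - f (x + t *: d))).
  apply/funext => h /=; congr (_ *: (f _ - _)).
  rewrite /shift /= [h *: 1]mulr1 scalerDl; idtac.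
  by rewrite addrCA.
split; first by rewrite /derivable E; exact: diff_derivable.
rewrite /derive E -/(derive f (x + t *: d) d) deriveE //.
exact: diff_grad.
Qed.

End Calc.


Lemma seg_eq (R : realType) (N : nat) (a b : 'rV[R]_N) (c : R) :
  (1 - c) *: a + c *: b = a + c *: (b - a).
Proof. by rewrite scalerBr scalerBl scale1r addrAC addrA. Qed.

Lemma psi_derive (R : realType) (N : nat) (f : 'rV[R]_N -> R) (x d : 'rV[R]_N) (c0 K : R) (s : R) :
  (forall y, differentiable f y) ->
  is_derive s (1:R) ((fun s : R => f (x + s *: d)) - c0 \*: (@id R) - K \*: ((@id R) ^+ 2))
    (dotv (gradient f (x + s *: d)) d - c0 - K * (2 * s)).
Proof.
move=> df.
have h1 := @phi_derive R N f x d s df.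
have h2 := @is_deriveZ _ _ _ id c0 s 1 _ (@is_derive_id _ _ s 1).
have h3 := @is_deriveZ _ _ _ _ K s 1 _ (@is_deriveX _ _ id 2 s 1 _ (@is_derive_id _ _ s 1)).
have h4 := is_deriveB (is_deriveB h1 h2) h3.
have E : dotv (gradient f (x + s *: d)) d - c0%:A - K *: (2 * s ^+ 2.-1)%:A
  = dotv (gradient f (x + s *: d)) d - c0 - K * (2 * s).
  by rewrite /= expr1 [c0%:A]mulr1 [(2 * s)%:A]mulr1.
by rewrite -E.
Qed.

Lemma final_arith (R : realType) (L a s r c0 gd fx fb delta : R) :
  fx - c0 - L * r ^+ 2 / 2 - fb <= 0 -> c0 <= gd + a * L * r ->
  gd <= - (L * r ^+ 2) -> L * s ^+ 2 = L * a ^+ 2 + 2 * delta ->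
  0 <= L * ((r - a - s) * (r - a + s)) -> fx <= fb - delta.
Proof. move=> *; lra. Qed.

Lemma hp_arith (R : realType) (L a s r : R) :
  0 < L -> 0 <= s -> a + s <= r -> 0 <= L * ((r - a - s) * (r - a + s)).
Proof.
move=> L0 s0 h; apply: mulr_ge0; first exact: ltW.
by apply: mulr_ge0; lra.
Qed.

Theorem lemma3 (R : realType) (N : nat) (X : set 'rV[R]_N)
  (f : 'rV[R]_N -> R) (L eps delta beta : R)
  (xbar g xnext : 'rV[R]_N) :
  convex_setE X -> compact X ->
  (forall x : 'rV[R]_N, differentiable f x) ->
  convex_fun f ->
  0 < L ->
  (forall x y, X x -> X y ->
     enorm (gradient f x - gradient f y) <= L * enorm (x - y)) ->
  X xbar ->
  0 < eps ->
  enorm (g - gradient f xbar) <= eps ->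
  eps < enorm g ->
  0 < delta ->
  0 < beta -> beta <= L^-1 ->
  is_proj X (xbar - beta *: g) xnext ->
  eps / L + Num.sqrt (eps ^+ 2 / L ^+ 2 + 2 * delta / L) <= enorm (xnext - xbar) ->
  f xnext <= f xbar - delta.
Proof.
move=> Xc _ df _ L0 Lip Xb e0 hg _ d0 b0 bL [Xn Pn] hr.
set d := xnext - xbar.
set r := enorm d.
have r0 : 0 <= r by exact: enorm_ge0.
have r2 : dotv d d = r ^+ 2 by rewrite enorm_sq.
set w := xbar - beta *: g - xnext.
have key t : 0 < t <= 1 -> 0 <= 2 * dotv w d + t * r ^+ 2.
  move=> /andP[t0 t1].
  have Xy : X ((1 - t) *: xnext + t *: xbar) by apply: Xc => //; rewrite ltW ?t0.
  have /enorm_le_sq := Pn _ Xy.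
  have -> : xbar - beta *: g - ((1 - t) *: xnext + t *: xbar) = w + t *: d.
    rewrite /w /d scalerBl scale1r scalerBr.
    by rewrite opprD opprB !addrA; congr (_ - _); rewrite addrAC.
  rewrite dotv_expand r2 => h.
  have : 0 <= t * (2 * dotv w d + t * r ^+ 2) by lra.
  by rewrite pmulr_rge0.
have wd : 0 <= dotv w d.
  case: (lerP 0 (dotv w d)) => // ha.
  have pos : 0 < r ^+ 2 - dotv w d by rewrite subr_gt0 (lt_le_trans ha) // sqr_ge0.
  set t := - dotv w d / (r ^+ 2 - dotv w d).
  have ht : t * (r ^+ 2 - dotv w d) = - dotv w d by rewrite /t divfK // gt_eqF.
  have t0 : 0 < t by rewrite /t divr_gt0 // oppr_gt0.
  have t1 : t <= 1 by rewrite /t ler_pdivrMr // mul1r; have := sqr_ge0 r; lra.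
  have := key t; rewrite t0 t1 => /(_ isT) h.
  have hat : 0 < (- dotv w d) * t by rewrite mulr_gt0 // oppr_gt0.
  lra.
have hA : beta * dotv g d <= - r ^+ 2.
  move: wd; rewrite /w !dotvBl dotvZl.
  have : dotv d d = dotv xnext d - dotv xbar d by rewrite /d dotvBl.
  rewrite r2; lra.
have bL1 : beta * L <= 1 by rewrite -ler_pdivlMr // div1r.
have hgd : dotv g d <= - (L * r ^+ 2).
  have : 0 <= (1 - beta * L) * r ^+ 2 by rewrite mulr_ge0 ?sqr_ge0 // subr_ge0.
  move=> h.
  have : beta * dotv g d <= beta * (- (L * r ^+ 2)) by lra.
  by rewrite ler_pM2l.
set c0 := dotv (gradient f xbar) d.
set K := L * r ^+ 2 / 2.
set psi := ((fun s : R => f (xbar + s *: d)) - c0 \*: (@id R) - K \*: ((@id R) ^+ 2)).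
have dpsi s : is_derive s (1:R) psi _ := @psi_derive R N f xbar d c0 K s df.
have [c /andP[c0' c1] Ec] : exists2 c, (0 <= c <= 1) &
    psi 1 - psi 0 = (dotv (gradient f (xbar + c *: d)) d - c0 - K * (2 * c)) * (1 - 0).
  have cont : {within `[(0:R), 1], continuous psi}.
    apply: derivable_within_continuous => s _.
    exact: (@ex_derive _ _ _ _ _ _ _ (dpsi s)).
  have [c cin Ec] := @MVT_segment R psi
     (fun s => dotv (gradient f (xbar + s *: d)) d - c0 - K * (2 * s)) 0 1 ler01
     (fun s _ => dpsi s) cont.
  by exists c => //; move: cin; rewrite in_itv.
have Xc' : X (xbar + c *: d) by rewrite /d -seg_eq; apply: Xc => //; rewrite c0' c1.
have hc : dotv (gradient f (xbar + c *: d)) d - c0 <= L * c * r ^+ 2.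
  rewrite /c0 -dotvBl.
  apply: (le_trans (cauchy_schwarz _ _)).
  have := Lip _ _ Xc' Xb.
  have -> : xbar + c *: d - xbar = c *: d by rewrite addrAC subrr add0r.
  rewrite enormZ // -/r => h.
  rewrite expr2 mulrA; apply: ler_wpM2r => //.
  by rewrite -mulrA.
have hpsi : f xnext - c0 - K - f xbar <= 0.
  have -> : f xnext - c0 - K - f xbar = psi 1 - psi 0.
    by rewrite /psi /= !fctE /= scale1r scale0r addr0 expr1n expr0n /= !scaler0 [c0%:A]mulr1 [K%:A]mulr1 !subr0 /d [xbar + _]addrC subrK.
  rewrite Ec subr0 mulr1 /K; lra.
have hc0 : c0 <= dotv g d + eps * r.
  have -> : c0 = dotv g d + dotv (gradient f xbar - g) d by rewrite dotvBl addrC subrK.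
  rewrite lerD2l; apply: (le_trans (cauchy_schwarz _ _)).
  by rewrite -enormN opprB ler_wpM2r.
set a := eps / L.
set s := Num.sqrt (eps ^+ 2 / L ^+ 2 + 2 * delta / L).
have s0 : 0 <= s by exact: sqrtr_ge0.
have ea : eps = a * L by rewrite /a divfK // gt_eqF.
have hs2 : L * s ^+ 2 = L * a ^+ 2 + 2 * delta.
  rewrite /s sqr_sqrtr; last by rewrite addr_ge0 // ?divr_ge0 ?sqr_ge0 ?mulr_ge0 ?ltW.
  rewrite /a expr_div_n mulrDr; congr (_ + _); rewrite mulrC divfK // gt_eqF //.
have hras : a + s <= r by [].
have hp : 0 <= L * ((r - a - s) * (r - a + s)).
  exact: hp_arith.
rewrite /K in hpsi.
rewrite ea in hc0.
move: hpsi hc0 hgd hs2 hp; exact: final_arith.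
Qed.
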